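(* Let $\lambda\geq\kappa$ be regular infinite cardinals. Let $\mathcal{L}$ be a distributive lattice which, regarded as a (poset) category, is $(\lambda,\kappa)$-coherent, and let $(A_i)_{i<\kappa}$ be a collection of subsets of $\mathcal{L}$, each of cardinality $<\lambda$. Then there is a set $X$ and an injective order-preserving map $\mathcal{L}\hookrightarrow\mathcal{P}(X)$ into the power set Boolean algebra which preserves all meets of fewer than $\kappa$ elements and which, for each $i<\kappa$, preserves the join $\bigcup A_i$.
   Context: A category $\mathcal{C}$ is $(\lambda,\kappa)$-coherent if: (i) it has all limits of diagrams with fewer than $\kappa$ morphisms; (ii) it has pullback-stable effective epi–mono factorizations; (iii) it has pullback-stable unions of fewer than $\lambda$ subobjects; (iv) for every rooted cotree in $\mathcal{C}$ (a diagram indexed by the opposite of a rooted tree, with arrows from the immediate successors of each node into it) such that at each node having immediate successors these form an extremal epimorphic family with fewer than $\lambda$ members, every branch has length $<\kappa$, and every branch is continuous (objects at limit positions are limits of the preceding objects), the family of transfinite cocompositions of the branches (limit of the branch with its map to the root) is extremal epimorphic on the root. A family $(f_i:x_i\to y)$ is extremal epimorphic if it does not factor through any proper subobject of $y$. *)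

(* Defs.v *)
From HB Require Import structures.
From mathcomp Require Import all_boot all_order.
From mathcomp Require Import boolp classical_sets functions cardinality.
Set Implicit Arguments. Unset Strict Implicit. Unset Printing Implicit Defensive.
Import Order.TTheory.
Local Open Scope classical_set_scope.
Local Open Scope order_scope.
Local Open Scope card_scope.

(* ---------- Cardinals ----------
   A cardinal is represented by a type of that cardinality.
   "fewer than kappa" for a set A means  A #< [set: K]. *)
Definition card_lt (T U : Type) (A : set T) (B : set U) : Prop :=
  (A #<= B) /\ ~ (B #<= A).

Definition regular_cardinal (K : Type) : Prop :=
  infinite_set [set: K] /\
  forall (I : Type) (F : I -> set K),
    card_lt [set: I] [set: K] ->
    (forall i, card_lt (F i) [set: K]) ->
    \bigcup_(i in [set: I]) F i <> [set: K].

Section PosetNotions.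
Context {d : Order.disp_t} {L : porderType d}.

Definition is_lb (S : set L) (x : L) := forall y, S y -> x <= y.
Definition is_ub (S : set L) (x : L) := forall y, S y -> y <= x.
(* limit of a diagram in a poset = greatest lower bound of its objects *)
Definition is_glb (S : set L) (x : L) :=
  is_lb S x /\ forall z, is_lb S z -> z <= x.
Definition is_lub (S : set L) (x : L) :=
  is_ub S x /\ forall z, is_ub S z -> x <= z.

(* (i) all limits of diagrams with fewer than kappa morphisms.  A diagram
   J -> L in a poset category has a limit iff the set of its objects has a
   glb; the arrows of J play no role (all cones commute). *)
Definition has_small_limits (K : Type) : Prop :=
  forall (J : Type) (D : J -> L),
    card_lt [set: J] [set: K] -> exists g, is_glb (range D) g.

(* x -> y is an effective epimorphism: y is the coequalizer of the kernel
   pair of x -> y (the kernel pair is x => x, so its coequalizer is the least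
   object receiving a map from x). *)
Definition eff_epi (x y : L) := x <= y /\ forall c, x <= c -> y <= c.

Definition extremal_epi (S : set L) (y : L) :=
  forall m, m <= y -> (forall s, S s -> s <= m) -> m = y.

Definition is_union_in (y : L) (S : set L) (u : L) :=
  u <= y /\ is_ub S u /\ forall m, m <= y -> is_ub S m -> u <= m.
End PosetNotions.

Section LatticeNotions.
Context {d : Order.disp_t} {L : latticeType d}.

(* (ii) pullback-stable (effective epi, mono) factorizations.  Every
   morphism of a poset is monic; pullbacks are binary meets. *)
Definition has_stable_image_factorizations : Prop :=
  forall x y : L, x <= y ->
    exists m : L, eff_epi x m /\ m <= y /\
      forall z : L, z <= y -> eff_epi (x `&` z) (m `&` z).

Definition has_stable_unions (Lam : Type) : Prop :=
  forall (J : Type) (S : J -> L) (y : L),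
    card_lt [set: J] [set: Lam] -> (forall j, S j <= y) ->
    exists u : L, is_union_in y (range S) u /\
      forall z : L, z <= y ->
        is_union_in z (range (fun j => z `&` S j)) (z `&` u).
End LatticeNotions.

Section Trees.
Context {T : Type} (lt : T -> T -> Prop) (r : T).

Definition rooted_tree : Prop :=
  (forall t, ~ lt t t) /\
  (forall a b c, lt a b -> lt b c -> lt a c) /\
  (forall t, t = r \/ lt r t) /\
  (forall t s s', lt s t -> lt s' t -> s = s' \/ lt s s' \/ lt s' s) /\
  well_founded lt.

Definition imm_succ (t s : T) : Prop :=
  lt t s /\ ~ (exists u, lt t u /\ lt u s).

Definition is_chain (B : set T) : Prop :=
  forall a b, B a -> B b -> a = b \/ lt a b \/ lt b a.

Definition is_branch (B : set T) : Prop :=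
  is_chain B /\
  forall t, (forall b, B b -> t = b \/ lt t b \/ lt b t) -> B t.

Definition limit_position (t : T) : Prop :=
  t <> r /\ forall u, lt u t -> exists v, lt u v /\ lt v t.
End Trees.

Definition cotree_condition {d : Order.disp_t} (L : porderType d)
    (K Lam : Type) : Prop :=
  forall (T : Type) (lt : T -> T -> Prop) (r : T) (x : T -> L),
    rooted_tree lt r ->
    (* x is a diagram indexed by the opposite of the tree *)
    (forall s t, lt t s -> x s <= x t) ->
    (forall t, (exists s, imm_succ lt t s) ->
       card_lt [set s | imm_succ lt t s] [set: Lam] /\
       extremal_epi [set x s | s in [set s | imm_succ lt t s]] (x t)) ->
    (forall B, is_branch lt B -> card_lt B [set: K]) ->
    (forall B, is_branch lt B -> forall t, B t -> limit_position lt r t ->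
       is_glb [set x s | s in [set s | B s /\ lt s t]] (x t)) ->
    extremal_epi
      [set c | exists B, is_branch lt B /\ is_glb [set x b | b in B] c] (x r).

Definition coherent {d : Order.disp_t} (L : latticeType d)
    (Lam K : Type) : Prop :=
  has_small_limits (L := L) K /\
  has_stable_image_factorizations (L := L) /\
  has_stable_unions (L := L) Lam /\
  cotree_condition L K Lam.

(* Main.v *)
Require Import Defs.
From HB Require Import structures.
From mathcomp Require Import all_boot all_order.
From mathcomp Require Import boolp classical_sets functions cardinality.
From mathcomp Require Import wochoice.
From Stdlib Require Import Wellfounded ClassicalEpsilon.
Set Implicit Arguments. Unset Strict Implicit. Unset Printing Implicit Defensive.
Import Order.TTheory.
Local Open Scope classical_set_scope.
Local Open Scope order_scope.
Local Open Scope card_scope.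

Lemma cle_inj T U (A : set T) (B : set U) (f : T -> U) :
  (forall a, A a -> B (f a)) ->
  (forall a b, A a -> A b -> f a = f b -> a = b) -> A #<= B.
Proof.
move=> fAB finj.
have h : {in A &, injective f}.
  by move=> a b; rewrite !inE => Aa Ab; apply: finj.
have := inj_card_eq h; rewrite card_eq_le => /andP[_ H1].
apply: card_le_trans H1 _; apply: subset_card_le => _ [a Aa <-]; exact: fAB.
Qed.

Lemma cle_fun T U (A : set T) (B : set U) : A #<= B ->
  (exists a, A a) ->
  exists f : T -> U, (forall a, A a -> B (f a)) /\
    (forall a b, A a -> A b -> f a = f b -> a = b).
Proof.
move=> /card_leP[g] [a0 Aa0].
pose h (a : T) : set_type A := match pselect (A a) with
  | left p => exist _ a (mem_set p)
  | right _ => exist _ a0 (mem_set Aa0) end.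
exists (fun a => val (g (h a))); split.
  move=> a _; exact: (set_mem (valP (g (h a)))).
move=> a b Aa Ab /val_inj E.
have := @inj _ _ _ g (h a) (h b) (mem_set I) (mem_set I) E.
rewrite /h; case: pselect => // p; case: pselect => // q.
by move=> [].
Qed.
Lemma clt_le T U V (A : set T) (C : set U) (D : set V) :
  A #<= C -> card_lt C D -> card_lt A D.
Proof.
move=> hAC [hCD nDC]; split; first exact: card_le_trans hAC hCD.
by move=> DA; apply: nDC; exact: card_le_trans DA hAC.
Qed.

Lemma finite_small T K (A : set T) : infinite_set [set: K] -> finite_set A ->
  card_lt A [set: K].
Proof.
move=> infK finA; split.
  have /infiniteP nK := infK.
  case: finA => n /card_eqPle [An _].
  apply: card_le_trans An _; apply: card_le_trans nK.
  by apply: subset_card_le.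
by move=> KA; apply: infK; exact: card_le_finite KA finA.
Qed.

Lemma reg2 K (P Q : set K) : regular_cardinal K ->
  card_lt P [set: K] -> card_lt Q [set: K] -> P `|` Q <> [set: K].
Proof.
move=> [infK regK] sP sQ.
have := regK bool (fun b => if b then P else Q).
have hb : card_lt [set: bool] [set: K] by apply: finite_small => //; exact: finite_finset.
move=> /(_ hb) /(_ (fun b => if b as b0 return card_lt (if b0 then P else Q) [set: K] then sP else sQ)).
move=> H E; apply: H; rewrite -E; apply/seteqP; split => z.
  by move=> [[] _ ?]; [left|right].
by case=> ?; [exists true|exists false].
Qed.

Lemma regJ K J (F : J -> set K) : regular_cardinal K ->
  card_lt [set: J] [set: K] -> (forall j, card_lt (F j) [set: K]) ->
  exists k, forall j, ~ F j k.
Proof.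
move=> [_ regK] sJ sF; have := regK J F sJ sF.
apply: contra_notP => H; apply/seteqP; split => // k _.
by apply: contra_notP (H) => nk; exists k => j Fj; apply: nk; exists j.
Qed.
Lemma wo_exists (K : Type) : exists lt0 : K -> K -> Prop,
  (forall i, ~ lt0 i i) /\ (forall i j k, lt0 i j -> lt0 j k -> lt0 i k) /\
  (forall i j, i <> j -> lt0 i j \/ lt0 j i) /\ well_founded lt0.
Proof.
have [R wo] := well_ordering_principle {classic K}.
have mn : forall P : K -> Prop, (exists z, P z) ->
    exists z, P z /\ (forall w, P w -> R z w) /\
      (forall z', P z' -> (forall w, P w -> R z' w) -> z' = z).
  move=> P [z0 Pz0].
  have ne : nonempty [pred z : {classic K} | `[< P z >]].
    by exists z0; rewrite inE.
  have [z [[zA lbz] uz]] := wo _ ne.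
  exists z; split; first by move: zA; rewrite inE.
  split; first by move=> w Pw; apply: lbz; rewrite inE.
  move=> z' Pz' lbz'; symmetry; apply: uz; split; first by rewrite inE.
  by move=> w; rewrite inE; apply: lbz'.
have refl : forall x, R x x.
  move=> x; have [z [Pz [lbz _]]] := mn (fun z => z = x) (ex_intro _ x erefl).
  by subst z; apply: lbz.
have anti : forall x y, R x y -> R y x -> x = y.
  move=> x y Rxy Ryx.
  have [z [Pz [lbz uz]]] := mn (fun z => z = x \/ z = y) (ex_intro _ x (or_introl erefl)).
  have -> : x = z by apply: uz; [left|move=> w [->|->]].
  by symmetry; apply: uz; [right|move=> w [->|->]].
have tot : forall x y, R x y \/ R y x.
  move=> x y.
  have [z [Pz [lbz _]]] := mn (fun z => z = x \/ z = y) (ex_intro _ x (or_introl erefl)).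
  case: Pz => <-; [left; exact: lbz (or_intror erefl)|right; exact: lbz (or_introl erefl)].
have trans : forall x y w, R x y -> R y w -> R x w.
  move=> x y w Rxy Ryw.
  have [z [Pz [lbz _]]] := mn (fun z => z = x \/ z = y \/ z = w) (ex_intro _ x (or_introl erefl)).
  case: Pz => [<-|[E|E]]; first by apply: lbz; right; right.
    subst z; have Ryx := lbz x (or_introl erefl).
    by rewrite (anti _ _ Rxy Ryx).
  subst z; have Rwy := lbz y (or_intror (or_introl erefl)).
  by rewrite -(anti _ _ Ryw Rwy).
exists (fun i j => R i j /\ i <> j); split; first by move=> i [].
split.
  move=> i j k [Rij nij] [Rjk njk]; split; first exact: trans Rjk.
  by move=> E; subst k; apply: nij; apply: anti.
split.
  by move=> i j nij; case: (tot i j) => H; [left|right]; split => // E; apply: nij.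
move=> a; apply: contrapT => na.
have [m [Pm [lbm _]]] := mn (fun z => ~ Acc (fun i j => R i j /\ i <> j) z) (ex_intro _ a na).
apply: Pm; constructor => z [Rzm nzm]; apply: contrapT => nz.
by apply: nzm; apply: anti => //; apply: lbm.
Qed.

Lemma wo_small (K : Type) : exists lt : K -> K -> Prop,
  (forall i, ~ lt i i) /\ (forall i j k, lt i j -> lt j k -> lt i k) /\
  (forall i j, i <> j -> lt i j \/ lt j i) /\ well_founded lt /\
  (forall k, card_lt [set j | lt j k] [set: K]).
Proof.
have [lt0 [irr0 [tr0 [tot0 wf0]]]] := wo_exists K.
have [e [einj esm]] : exists e : K -> K, (forall a b, e a = e b -> a = b) /\
    (forall i, card_lt [set j | lt0 j (e i)] [set: K]).
  have [allg|] := pselect (forall k, card_lt [set j | lt0 j k] [set: K]).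
    by exists id.
  move=> /existsNP [k0 bk0].
  have [m [bm minm]] : exists m, ~ card_lt [set j | lt0 j m] [set: K] /\
      forall j, lt0 j m -> card_lt [set j' | lt0 j' j] [set: K].
    elim/(well_founded_ind wf0): k0 bk0 => k IH bk.
    have [g|] := pselect (forall j, lt0 j k -> card_lt [set j' | lt0 j' j] [set: K]).
      by exists k.
    move=> /existsNP [j /not_implyP [ljk bj]]; exact: IH ljk bj.
  have KS : [set: K] #<= [set j | lt0 j m].
    apply: contrapT => nKS; apply: bm; split => //; exact: card_leT.
  have [k1 _] : exists k, [set: K] k by exists k0.
  have [e [eS einj]] := cle_fun KS (ex_intro _ k0 I).
  exists e; split; first by move=> a b; apply: einj.
  by move=> i; apply: minm; apply: eS.
exists (fun i j => lt0 (e i) (e j)); split; first by move=> i; apply: irr0.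
split; first by move=> i j k; apply: tr0.
split; first by move=> i j nij; apply: tot0 => E; apply: nij; apply: einj.
split; first exact: wf_inverse_image.
move=> k; apply: clt_le (esm k).
by apply: (cle_inj (f := e)) => // a b _ _; apply: einj.
Qed.

Definition good {d : Order.disp_t} {L : porderType d} (K : Type) (A : K -> set L)
    (F : set L) :=
  (forall x y, x <= y -> F x -> F y) /\
  (forall (J : Type) (D : J -> L) (g : L), card_lt [set: J] [set: K] ->
     is_glb (range D) g -> (forall j, F (D j)) -> F g) /\
  (forall i u, is_lub (A i) u -> F u -> exists a, A i a /\ F a).

Section Main.
Context {d : Order.disp_t} {L : distrLatticeType d} (K Lam : Type) (A : K -> set L).
Hypothesis regK : regular_cardinal K.
Hypothesis regLam : regular_cardinal Lam.
Hypothesis coh : coherent L Lam K.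
Hypothesis Asm : forall i, card_lt (A i) [set: Lam].
Variable lt : K -> K -> Prop.
Hypothesis ltirr : forall i, ~ lt i i.
Hypothesis lttr : forall i j k, lt i j -> lt j k -> lt i k.
Hypothesis lttot : forall i j, i <> j -> lt i j \/ lt j i.
Hypothesis ltwf : well_founded lt.
Hypothesis ltsm : forall k, card_lt [set j | lt j k] [set: K].
Variable z0 : K.
Definition kle i j := i = j \/ lt i j.
Hypothesis z0min : forall j, kle z0 j.
Variables xr yr : L.
Hypothesis nxy : ~ xr <= yr.

Lemma kle_refl i : kle i i. Proof. by left. Qed.
Lemma kle_trans i j k : kle i j -> kle j k -> kle i k.
Proof. by move=> [->|h1] [<-|h2]; [left|right|right|right; exact: lttr h2]. Qed.
Lemma klt_le_trans i j k : lt i j -> kle j k -> lt i k.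
Proof. by move=> h1 [<-|h2] //; exact: lttr h2. Qed.
Lemma kle_lt_trans i j k : kle i j -> lt j k -> lt i k.
Proof. by move=> [->|h1] h2 //; exact: lttr h2. Qed.
Lemma klt_le i j : lt i j -> kle i j. Proof. by right. Qed.
Lemma kle_or_lt i j : kle i j \/ lt j i.
Proof. by have [->|/lttot[]] := pselect (i = j); [left; left|left; right|right]. Qed.
Lemma klt_nle i j : lt i j -> ~ kle j i.
Proof. by move=> h [E|h']; [subst; exact: ltirr h|exact: ltirr (lttr h h')]. Qed.
Lemma knlt_le i j : ~ lt j i -> kle i j.
Proof. by case: (kle_or_lt i j). Qed.
Lemma knle_lt i j : ~ kle i j -> lt j i.
Proof. by case: (kle_or_lt i j). Qed.
Lemma kle_anti i j : kle i j -> kle j i -> i = j.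
Proof. by move=> [//|h] /(klt_nle h). Qed.

Lemma least (P : K -> Prop) : (exists z, P z) ->
  exists m, P m /\ forall j, P j -> kle m j.
Proof.
move=> [z Pz]; elim/(well_founded_ind ltwf): z Pz => z IH Pz.
have [H|] := pselect (exists j, P j /\ lt j z).
  by case: H => j [Pj ljz]; exact: IH ljz Pj.
move=> /forallNP H; exists z; split=> // j Pj; apply: knlt_le => ljz.
by apply: (H j).
Qed.

Definition isSucc p s := lt p s /\ forall j, lt p j -> kle s j.
Definition isLim l := l <> z0 /\ forall p, ~ isSucc p l.

Lemma succ_pred p q s : isSucc p s -> isSucc q s -> p = q.
Proof.
move=> [ps hp] [qs hq]; apply: kle_anti; apply: knlt_le => h.
  by apply: (klt_nle ps); apply: hq.
by apply: (klt_nle qs); apply: hp.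
Qed.

Lemma lt_succ p s v : isSucc p s -> lt v s -> kle v p.
Proof. by move=> [ps hp] vs; apply: knlt_le => pv; exact: klt_nle vs (hp _ pv). Qed.

Lemma succ_ex p : exists s, isSucc p s.
Proof.
have [[j pj]|] := pselect (exists j, lt p j).
  have [s [ps hs]] := least (ex_intro _ j pj).
  by exists s; split.
move=> /forallNP H; exfalso.
have [infK _] := regK.
apply: (reg2 regK (ltsm p) (finite_small infK (finite_set1 p))).
apply/seteqP; split => // k _.
by have [[->|kp]|pk] := kle_or_lt k p; [right|left|case: (H k)].
Qed.

Lemma lim_or_succ w : w = z0 \/ (exists p, isSucc p w) \/ isLim w.
Proof.
have [->|nz] := pselect (w = z0); first by left.
have [|/forallNP H] := pselect (exists p, isSucc p w); first by right; left.
by right; right; split.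
Qed.

Definition agree (a : K) (h h' : K -> L) := forall w, kle w a -> h w = h' w.

Definition Rel (a : K) (h : K -> L) (i : K) :=
  (exists u, is_lub (A i) u /\ h a <= u) /\
  ~ (exists w, kle w a /\ exists b, A i b /\ h w <= b).

Definition NextP (a : K) (h : K -> L) (v : L) :=
  (exists i, Rel a h i /\ (forall j, Rel a h j -> kle i j) /\
     exists b, A i b /\ v = h a `&` b) \/
  ((forall i, ~ Rel a h i) /\ v = h a).

Lemma Rel_agree a h h' i : agree a h h' -> Rel a h i -> Rel a h' i.
Proof.
move=> ag [[u [lu hu]] ns]; split.
  by exists u; split => //; rewrite -ag //; exact: kle_refl.
move=> [w [wa [b [Ab hb]]]]; apply: ns; exists w; split => //; exists b; split => //.
by rewrite ag.
Qed.

Lemma agree_sym a h h' : agree a h h' -> agree a h' h.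
Proof. by move=> ag w wa; rewrite ag. Qed.

Lemma NextP_agree a h h' v : agree a h h' -> NextP a h v -> NextP a h' v.
Proof.
move=> ag [[i [ri [mi [b [Ab ->]]]]]|[nr ->]].
  left; exists i; split; first exact: Rel_agree ri.
  split; first by move=> j /(Rel_agree (agree_sym ag)); apply: mi.
  by exists b; split => //; rewrite ag //; exact: kle_refl.
right; split; first by move=> i /(Rel_agree (agree_sym ag)); apply: nr.
by rewrite ag //; exact: kle_refl.
Qed.

Lemma NextP_le a h v : NextP a h v -> v <= h a.
Proof. by move=> [[i [_ [_ [b [_ ->]]]]]|[_ ->]]; [exact: leIl|]. Qed.

Lemma NextP_ex a h : ~ h a <= yr -> exists v, NextP a h v.
Proof.
move=> nh.
have [[i ri]|/forallNP nr] := pselect (exists i, Rel a h i); last first.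
  by exists (h a); right.
have [m [rm mm]] := least (ex_intro _ i ri).
have [[b Ab]|/forallNP nb] := pselect (exists b, A m b).
  by exists (h a `&` b); left; exists m; split => //; split => //; exists b.
exfalso; case: rm => [[u [[_ lu] hu]] _]; apply: nh.
apply: (Order.POrderTheory.le_trans hu); apply: lu => z Az; by case: (nb z).
Qed.


Definition valid (a : K) (h : K -> L) :=
  [/\ (forall w, ~ kle w a -> h w = xr), h z0 = xr,
      (forall w, lt w a -> ~ h w <= yr),
      (forall p s, isSucc p s -> kle s a -> NextP p h (h s)) &
      (forall l, isLim l -> kle l a -> is_glb [set h w | w in [set w | lt w l]] (h l))].

Definition restr (h : K -> L) (a : K) : K -> L :=
  fun w => if pselect (kle w a) then h w else xr.

Lemma restrE h a w : kle w a -> restr h a w = h w.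
Proof. by rewrite /restr; case: pselect. Qed.
Lemma restrN h a w : ~ kle w a -> restr h a w = xr.
Proof. by rewrite /restr; case: pselect. Qed.

Lemma agree_restr h a b : kle b a -> agree b h (restr h a).
Proof. by move=> ba w wb; rewrite restrE //; exact: kle_trans wb ba. Qed.

Lemma glb_set_eq (h h' : K -> L) l : (forall w, lt w l -> h w = h' w) ->
  [set h w | w in [set w | lt w l]] = [set h' w | w in [set w | lt w l]].
Proof.
move=> E; apply/seteqP; split => _ [w wl <-]; exists w => //; by rewrite E.
Qed.

Lemma valid_restr b h a : valid b h -> kle a b -> valid a (restr h a).
Proof.
move=> [V1 V2 V3 V4 V5] ab; split.
- by move=> w; apply: restrN.
- by rewrite restrE.
- by move=> w wa; rewrite restrE; [apply: V3; exact: klt_le_trans ab|exact: klt_le].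
- move=> p s ps sa; rewrite restrE //; apply: NextP_agree (V4 _ _ ps (kle_trans sa ab)).
  by apply: agree_restr; apply: kle_trans sa; apply: klt_le; case: ps.
- move=> l ll la; rewrite restrE // -(glb_set_eq (h := h)); first exact: V5 (kle_trans la ab).
  by move=> w wl; rewrite restrE //; apply: kle_trans la; exact: klt_le.
Qed.

Lemma valid_ext a h h' : valid a h -> (forall w, h w = h' w) -> valid a h'.
Proof. by move=> V E; have -> : h' = h by apply: funext => w; rewrite E. Qed.

Lemma valid_of_prefix a h :
  (forall w, ~ kle w a -> h w = xr) -> h z0 = xr ->
  (forall w, lt w a -> ~ h w <= yr) ->
  (forall b, lt b a -> valid b (restr h b)) ->
  (forall p, isSucc p a -> NextP p h (h a)) ->
  (isLim a -> is_glb [set h w | w in [set w | lt w a]] (h a)) ->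
  valid a h.
Proof.
move=> V1 V2 V3 P top lim; split => //.
- move=> p s ps [E|sa]; first by subst s; exact: top.
  have [_ _ _ V4 _] := P s sa.
  have := V4 p s ps (kle_refl s); rewrite restrE; last exact: kle_refl.
  by apply: NextP_agree => w wp; rewrite restrE //; apply: kle_trans wp _; apply: klt_le; case: ps.
- move=> l ll [E|la]; first by subst l; exact: lim.
  have [_ _ _ _ V5] := P l la.
  have := V5 l ll (kle_refl l); rewrite restrE; last exact: kle_refl.
  by rewrite (glb_set_eq (h' := h)) // => w wl; rewrite restrE //; exact: klt_le.
Qed.

Definition Node := {p : K * (K -> L) | valid p.1 p.2}.
Definition lv (t : Node) := (proj1_sig t).1.
Definition fn (t : Node) := (proj1_sig t).2.
Definition xv (t : Node) := fn t (lv t).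
Definition tlt (s t : Node) := lt (lv s) (lv t) /\ agree (lv s) (fn s) (fn t).

Lemma nodeV (t : Node) : valid (lv t) (fn t). Proof. exact: (proj2_sig t). Qed.

Lemma node_eq (s t : Node) : lv s = lv t -> agree (lv s) (fn s) (fn t) -> s = t.
Proof.
case: s => [[a h] Vs]; case: t => [[b h'] Vt]; rewrite /lv /fn /= => E ag; subst b.
have E : h = h'.
  apply: funext => w; have [wa|wa] := pselect (kle w a); first exact: ag.
  by case: Vs => /= V1 _ _ _ _; case: Vt => /= V1' _ _ _ _; rewrite V1 // V1'.
subst h'; congr exist; exact: Prop_irrelevance.
Qed.

Definition rnode (t : Node) (a : K) (H : kle a (lv t)) : Node :=
  exist _ (a, restr (fn t) a) (valid_restr (nodeV t) H).

Lemma rnode_lt (t : Node) a (H : kle a (lv t)) : lt a (lv t) -> tlt (rnode H) t.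
Proof.
move=> alt; split => //= w wa; rewrite /fn /= restrE //.
Qed.

Lemma tlt_rnode (s t : Node) (H : tlt s t) :
  s = rnode (klt_le (proj1 H)).
Proof.
apply: node_eq => //= w ws; have [_ ag] := H; rewrite ag //.
by rewrite /fn /= restrE.
Qed.

Lemma xv_rnode (t : Node) a (H : kle a (lv t)) : xv (rnode H) = fn t a.
Proof. by rewrite /xv /fn /lv /= restrE //; exact: kle_refl. Qed.


Lemma valid_mono a h v w : valid a h -> kle v w -> kle w a -> h w <= h v.
Proof.
move=> Va; elim/(well_founded_ind ltwf): w v => w IH v [<-//|vw] wa.
have [_ _ _ V4 V5] := Va.
have [E|[[p ps]|wl]] := lim_or_succ w.
- by subst w; case: (klt_nle vw (z0min v)).
- apply: (Order.POrderTheory.le_trans (NextP_le (V4 _ _ ps wa))).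
  apply: IH; [by case: ps| exact: lt_succ ps vw|].
  by apply: kle_trans wa; apply: klt_le; case: ps.
- by have [lb _] := V5 w wl wa; apply: lb; exists v.
Qed.

Lemma root_valid : valid z0 (fun _ => xr).
Proof.
split.
- by [].
- by [].
- by move=> w wz; case: (klt_nle wz (z0min w)).
- move=> p s [ps _] sz; have E := kle_anti sz (z0min s); subst s.
  by case: (klt_nle ps (z0min p)).
- move=> l [lz _] lz'; by case: lz; apply: kle_anti lz' (z0min l).
Qed.

Definition root : Node := exist _ (z0, fun _ => xr) root_valid.

Lemma tree_ok : rooted_tree tlt root.
Proof.
split; first by move=> t [h _]; exact: ltirr h.
split.
  move=> a b c [ab agab] [bc agbc]; split; first exact: lttr bc.
  by move=> w wa; rewrite agab // agbc //; apply: kle_trans wa _; exact: klt_le.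
split.
  move=> t; have [E|zt] : lv t = z0 \/ lt z0 (lv t).
    by case: (z0min (lv t)) => [<-|h]; [left|right].
    left; apply: node_eq => // w wt; rewrite E in wt.
    have E2 := kle_anti wt (z0min w); subst w.
    by have [_ V2 _ _ _] := nodeV t; rewrite V2.
  right; split => // w wz; have E2 := kle_anti wz (z0min w); subst w.
  by have [_ V2 _ _ _] := nodeV t; rewrite V2.
split.
  move=> t s s' [st ags] [s't ags'].
  have [E|/lttot [h|h]] := pselect (lv s = lv s').
  - left; apply: node_eq => // w ws; rewrite ags // ags' //; by rewrite -E.
  - right; left; split => // w ws; rewrite ags // ags' //.
    by apply: kle_trans ws _; exact: klt_le.
  - right; right; split => // w ws; rewrite ags' // ags //.
    by apply: kle_trans ws _; exact: klt_le.
apply: (wf_incl _ _ (fun s t => lt (lv s) (lv t))).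
  by move=> s t [].
exact: wf_inverse_image.
Qed.

Lemma tree_mono s t : tlt t s -> xv s <= xv t.
Proof.
move=> [ts ag]; rewrite /xv (ag (lv t) (kle_refl _)).
exact: valid_mono (nodeV s) (klt_le ts) (kle_refl _).
Qed.

Section Ext.
Variables (t : Node) (s : K) (v : L).
Hypotheses (ss : isSucc (lv t) s) (nv : NextP (lv t) (fn t) v) (nt : ~ xv t <= yr).

Definition extf (w : K) : L :=
  if pselect (kle w (lv t)) then fn t w else if pselect (w = s) then v else xr.

Lemma extf_le w : kle w (lv t) -> extf w = fn t w.
Proof. by rewrite /extf; destruct (pselect (kle w (lv t))). Qed.
Lemma extf_s : extf s = v.
Proof.
rewrite /extf; destruct (pselect (kle s (lv t))) as [h|h].
  by case: (klt_nle (proj1 ss) h).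
by destruct (pselect (s = s)).
Qed.

Lemma ext_valid : valid s extf.
Proof.
have ts := proj1 ss.
apply: valid_of_prefix.
- move=> w ws; rewrite /extf; destruct (pselect (kle w (lv t))) as [h|h].
    by case: ws; right; exact: kle_lt_trans h ts.
  by destruct (pselect (w = s)) as [E|E] => //; case: ws; left.
- by rewrite extf_le //; have [_ V2 _ _ _] := nodeV t.
- move=> w ws; rewrite extf_le; last exact: lt_succ ss ws.
  have [E|wt] := lt_succ ss ws; first by subst w.
  by have [_ _ V3 _ _] := nodeV t; apply: V3.
- move=> b bs; have bt := lt_succ ss bs.
  apply: (valid_ext (h := restr (fn t) b)); first exact: valid_restr (nodeV t) bt.
  move=> w; rewrite /restr; destruct (pselect (kle w b)) as [wb|wb] => //.
  by rewrite extf_le //; exact: kle_trans wb bt.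
- move=> p ps; have E := succ_pred ps ss; subst p.
  rewrite extf_s; apply: NextP_agree nv => w wt; by rewrite extf_le.
- by move=> [_ H]; case: (H (lv t)).
Qed.

Definition enode : Node := exist _ (s, extf) ext_valid.

Lemma enode_succ : tlt t enode /\ ~ (exists u, tlt t u /\ tlt u enode).
Proof.
split.
  split; first exact: (proj1 ss).
  by move=> w wt; rewrite /fn /= extf_le.
move=> [u [[tu _] [us _]]].
by have [_ H] := ss; apply: (klt_nle us); apply: H.
Qed.

Lemma xv_enode : xv enode = v.
Proof. exact: extf_s. Qed.
End Ext.

Lemma imm_isSucc t s : imm_succ tlt t s -> isSucc (lv t) (lv s).
Proof.
move=> [[ts ag] nb]; split => // j tj; apply: knlt_le => js.
apply: nb; exists (rnode (klt_le js)); split; last exact: rnode_lt.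
split => //= w wt; rewrite ag // /fn /= restrE //.
by apply: kle_trans wt _; exact: klt_le.
Qed.

Lemma imm_next t s : imm_succ tlt t s -> NextP (lv t) (fn t) (xv s).
Proof.
move=> im; have ss := imm_isSucc im; have [[ts ag] _] := im.
have [_ _ _ V4 _] := nodeV s.
have := V4 _ _ ss (kle_refl _); apply: NextP_agree.
by move=> w wt; rewrite ag.
Qed.

Lemma succ_uniq p s s' : isSucc p s -> isSucc p s' -> s = s'.
Proof.
move=> [ps hs] [ps' hs']; apply: kle_anti; [exact: hs ps'|exact: hs' ps].
Qed.

Lemma imm_inj t s s' : imm_succ tlt t s -> imm_succ tlt t s' -> xv s = xv s' -> s = s'.
Proof.
move=> im im' E.
have El := succ_uniq (imm_isSucc im) (imm_isSucc im').
have [[_ ag] _] := im; have [[_ ag'] _] := im'.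
apply: node_eq => // w [E1|ws]; first by subst w; move: E; rewrite /xv El.
have wt := lt_succ (imm_isSucc im) ws.
by rewrite -ag // -ag'.
Qed.


Lemma succ_ok t : (exists s, imm_succ tlt t s) ->
  card_lt [set s | imm_succ tlt t s] [set: Lam] /\
  extremal_epi [set xv s | s in [set s | imm_succ tlt t s]] (xv t).
Proof.
move=> [s0 im0].
have ss := imm_isSucc im0.
have nt : ~ xv t <= yr.
  have [[t0 ag] _] := im0; have [_ _ V3 _ _] := nodeV s0.
  by rewrite /xv (ag (lv t) (kle_refl _)); apply: V3.
split.
  apply: (@clt_le _ _ _ _ [set v | NextP (lv t) (fn t) v]).
    apply: (cle_inj (f := xv)) => [s im|s s' im im' E]; first exact: imm_next im.
    exact: imm_inj im im' E.
  have [[i ri]|/forallNP nr] := pselect (exists i, Rel (lv t) (fn t) i).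
    have [m [rm mm]] := least (ex_intro _ i ri).
    apply: clt_le (Asm m).
    apply: card_le_trans (card_image_le (fun b => fn t (lv t) `&` b) (A m)).
    apply: subset_card_le => v [[j [rj [mj [b [Ab ->]]]]]|[nr' _]]; last by case: (nr' m rm).
    have E : j = m by apply: kle_anti (mj m rm) (mm j rj).
    by subst j; exists b.
  have [infL _] := regLam.
  apply: clt_le (finite_small infL (finite_set1 (fn t (lv t)))).
  apply: subset_card_le => v [[j [rj _]]|[_ ->]] //.
  by case: (nr j).
move=> m mz ub.
have vals : forall v, NextP (lv t) (fn t) v -> v <= m.
  move=> v nv; apply: ub; exists (enode ss nv nt); first exact: enode_succ.
  exact: xv_enode.
apply: Order.POrderTheory.le_anti; rewrite mz /=.
have [[i ri]|/forallNP nr] := pselect (exists i, Rel (lv t) (fn t) i); last first.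
  by apply: vals; right.
have [m' [rm mm]] := least (ex_intro _ i ri).
have [[u [lu hau]] _] := rm.
have [_ [_ [su _]]] := coh.
pose J := {b : L | A m' b}.
have Jsm : card_lt [set: J] [set: Lam].
  apply: clt_le (Asm m'); apply: (cle_inj (f := @proj1_sig _ _)).
    by move=> [b Ab].
  move=> [b1 p1] [b2 p2] _ _ /= E; subst b2; congr exist; exact: Prop_irrelevance.
have Su : forall j : J, proj1_sig j <= u by move=> [b Ab]; case: lu => ubu _; exact: ubu.
have [u' [[u'u [u'ub _]] stab]] := su J (@proj1_sig _ _) u Jsm Su.
have Eu : u' = u.
  apply: Order.POrderTheory.le_anti; rewrite u'u /=.
  case: lu => _ lst; apply: lst => b Ab; apply: u'ub.
  by exists (exist _ b Ab).
have [_ [_ lst]] := stab _ hau.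
have := lst m mz; rewrite Eu (meet_l hau); apply.
move=> _ [[b Ab] _ <-] /=; apply: vals; left; exists m'; split => //; split => //.
by exists b.
Qed.


Section Branch.
Variable B : set Node.
Hypothesis bB : is_branch tlt B.

Lemma br_down s t : B t -> tlt s t -> B s.
Proof.
move=> Bt st; have [ch mx] := bB; apply: mx => b Bb.
have [_ [trans [_ [lin _]]]] := tree_ok.
have [<-|[tb|bt]] := ch _ _ Bt Bb; [by right; left|by right; left; apply: trans st tb|].
exact: lin st bt.
Qed.

Lemma br_root : B root.
Proof.
have [ch mx] := bB; apply: mx => b Bb.
have [_ [_ [rt _]]] := tree_ok.
by have [->|h] := rt b; [left|right; left].
Qed.

Lemma br_inj s t : B s -> B t -> lv s = lv t -> s = t.
Proof.
move=> Bs Bt E; have [ch _] := bB.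
case: (ch _ _ Bs Bt) => [//|[[h _]|[h _]]]; by rewrite E in h; case: (ltirr h).
Qed.

Lemma br_abs t a : B t -> ~ (exists u, B u /\ lv u = a) -> lt (lv t) a.
Proof.
move=> Bt na; have [E|E] := pselect (lv t = a); first by case: na; exists t.
have [//|ha] := lttot E.
case: na; exists (rnode (klt_le ha)); split => //.
by apply: br_down Bt _; apply: rnode_lt.
Qed.

Definition HB (w : K) : L :=
  epsilon (inhabits xr) (fun v => exists t, B t /\ lv t = w /\ xv t = v).

Lemma HB_spec b w : B b -> kle w (lv b) -> HB w = fn b w.
Proof.
move=> Bb wb.
have [u [Bu [lu xu]]] : exists u, B u /\ lv u = w /\ xv u = fn b w.
  case: wb => [E|h]; first by exists b; subst w.
  exists (rnode (klt_le h)); split; first by apply: br_down Bb _; apply: rnode_lt.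
  by split => //; rewrite xv_rnode.
have [t' [Bt' [lt' xt']]] : exists t, B t /\ lv t = w /\ xv t = HB w.
  by apply: (epsilon_spec (inhabits xr) (fun v => exists t, B t /\ lv t = w /\ xv t = v)); exists (xv u), u.
have E := br_inj Bt' Bu (etrans lt' (esym lu)); subst t'.
by rewrite -xt' xu.
Qed.

Lemma HB_xv b : B b -> HB (lv b) = xv b.
Proof. by move=> Bb; rewrite (HB_spec Bb (kle_refl _)). Qed.

End Branch.


Lemma cont_ok B : is_branch tlt B -> forall t, B t -> limit_position tlt root t ->
  is_glb [set xv s | s in [set s | B s /\ tlt s t]] (xv t).
Proof.
move=> bB t Bt [tr lp].
have [_ [_ [rt _]]] := tree_ok.
have tz : lv t <> z0.
  by case: (rt t) => [//|[h _]] E; rewrite E in h; case: (ltirr h).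
have tl : isLim (lv t).
  split => // p ps.
  have [u [[pu _] [ut _]]] := lp _ (rnode_lt (klt_le (proj1 ps)) (proj1 ps)).
  by apply: (klt_nle ut); apply: (proj2 ps).
have [_ _ _ _ V5] := nodeV t.
have := V5 _ tl (kle_refl _).
have -> // : [set xv s | s in [set s | B s /\ tlt s t]] =
    [set fn t w | w in [set w | lt w (lv t)]].
apply/seteqP; split.
  move=> _ [s [Bs [st ag]] <-]; exists (lv s) => //.
  by rewrite /xv ag //; exact: kle_refl.
move=> _ [w wt <-]; exists (rnode (klt_le wt)); last exact: xv_rnode.
split; last exact: rnode_lt.
exact: (br_down bB Bt (rnode_lt (klt_le wt) wt)).
Qed.

Lemma kbranch : exists H : K -> L, forall a, valid a (restr H a).
Proof.
apply: contrapT => NoK.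
have bounded : forall B, is_branch tlt B -> exists a, ~ exists u, B u /\ lv u = a.
  move=> B bB; apply: contrapT => /forallNP allp.
  apply: NoK; exists (HB B) => a.
  have [u [Bu lu]] : exists u, B u /\ lv u = a by apply: contrapT; apply: allp.
  apply: (valid_ext (h := fn u)); first by rewrite -lu; exact: nodeV.
  move=> w; rewrite /restr; destruct (pselect (kle w a)) as [wa|wa].
    by rewrite (HB_spec bB Bu) // lu.
  by have [V1 _ _ _ _] := nodeV u; rewrite V1 // lu.
have bsmall : forall B, is_branch tlt B -> card_lt B [set: K].
  move=> B bB; have [a na] := bounded B bB.
  apply: clt_le (ltsm a); apply: (cle_inj (f := lv)).
    by move=> t Bt; exact: (br_abs bB Bt na).
  by move=> s t Bs Bt; apply: (br_inj bB Bs Bt).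
have [_ [_ [_ cot]]] := coh.
have := cot Node tlt root xv tree_ok (fun s t h => tree_mono h) succ_ok bsmall cont_ok.
move=> ext; apply: nxy.
suff E : xr `&` yr = xr by rewrite -E; exact: leIr.
apply: ext; first exact: leIl.
move=> c [B [bB glbc]]; have [lbc _] := glbc.
have cxr : c <= xr by apply: lbc; exists root => //; exact: (br_root bB).
rewrite lexI cxr /=; apply: contrapT => ncy.
have cb : forall b, B b -> c <= xv b by move=> b Bb; apply: lbc; exists b.
have nby : forall b, B b -> ~ xv b <= yr.
  by move=> b Bb by1; apply: ncy; exact: Order.POrderTheory.le_trans (cb b Bb) by1.
have [a0 na0] := bounded B bB.
have [l [nal minl]] := least (P := fun a => ~ exists u, B u /\ lv u = a) (ex_intro _ a0 na0).
have pres : forall j, lt j l -> exists u, B u /\ lv u = j.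
  by move=> j jl; apply: contrapT => nj; apply: (klt_nle jl); apply: minl.
have [E|[[p ps]|ll]] := lim_or_succ l.
- by subst l; apply: (nal); exists root; split => //; exact: (br_root bB).
- have [tp [Btp lp]] := pres p (proj1 ps).
  have ss : isSucc (lv tp) l by rewrite lp.
  have [v nv] := NextP_ex (nby _ Btp).
  have [tpe nmid] := enode_succ ss nv (nby _ Btp).
  apply: (nal); exists (enode ss nv (nby _ Btp)); split => //.
  have [ch mx] := bB; apply: mx => b Bb.
  have bl := (br_abs bB Bb nal).
  have bp := lt_succ ps bl.
  have [_ [trans _]] := tree_ok.
  have [E|[h|h]] := ch _ _ Btp Bb.
  + by subst b; right; right; exact: tpe.
  + by case: (klt_nle (proj1 h)); rewrite lp.
  + by right; right; exact: (trans _ _ _ h tpe).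
- pose H' w := if pselect (lt w l) then HB B w else if pselect (w = l) then c else xr.
  have H'lt : forall w, lt w l -> H' w = HB B w.
    by move=> w wl; rewrite /H'; destruct (pselect (lt w l)).
  have H'l : H' l = c.
    rewrite /H'; destruct (pselect (lt l l)) as [h|h]; first by case: (ltirr h).
    by destruct (pselect (l = l)).
  have HBn : forall w, lt w l -> exists u, B u /\ lv u = w /\ HB B w = xv u.
    move=> w wl; have [u [Bu lu]] := pres w wl; exists u; do 2 split => //.
    by rewrite -lu HB_xv.
  have Vg : valid l H'.
    apply: valid_of_prefix.
    + move=> w wl; rewrite /H'; destruct (pselect (lt w l)) as [h|h].
        by case: wl; right.
      by destruct (pselect (w = l)) as [h'|h'] => //; case: wl; left.
    + have zl : lt z0 l by case: (z0min l) => // E; case: ll => /(_ (esym E)).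
      by rewrite H'lt // (HB_spec bB (br_root bB)) //; exact: kle_refl.
    + by move=> w wl; rewrite H'lt //; have [u [Bu [lu ->]]] := HBn w wl; exact: nby.
    + move=> b bl; have [u [Bu lu]] := pres b bl.
      apply: (valid_ext (h := fn u)); first by rewrite -lu; exact: nodeV.
      move=> w; rewrite /restr; destruct (pselect (kle w b)) as [wb|wb].
        by rewrite H'lt; [rewrite (HB_spec bB Bu) // lu|exact: kle_lt_trans wb bl].
      by have [V1 _ _ _ _] := nodeV u; rewrite V1 // lu.
    + by move=> p ps; case: ll => _ /(_ p).
    + move=> _; rewrite H'l.
      suff -> : [set H' w | w in [set w | lt w l]] = [set xv b | b in B] by [].
      apply/seteqP; split.
        move=> _ [w wl <-]; have [u [Bu [lu E]]] := HBn w wl.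
        by exists u => //; rewrite H'lt // E.
      move=> _ [b Bb <-]; exists (lv b); first exact: (br_abs bB Bb nal).
      by rewrite H'lt ?HB_xv //; exact: (br_abs bB Bb nal).
  pose g : Node := exist _ (l, H') Vg.
  apply: (nal); exists g; split => //.
  have [ch mx] := bB; apply: mx => b Bb.
  right; right; split; first exact: (br_abs bB Bb nal).
  move=> w wb; have wl := kle_lt_trans wb (br_abs bB Bb nal).
  have := H'lt w wl; rewrite (HB_spec bB Bb wb) => E.
  by rewrite -E.
Qed.


Lemma sep : exists F : set L, good A F /\ F xr /\ ~ F yr.
Proof.
have [H VH] := kbranch.
have Hr : forall a w, kle w a -> restr H a w = H w by move=> a w; apply: restrE.
have mono : forall v w, kle v w -> H w <= H v.
  move=> v w vw; rewrite -(Hr w w (kle_refl _)) -(Hr w v vw).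
  exact: valid_mono (VH w) vw (kle_refl _).
have [sc hsc] := @choice _ _ (fun p s => isSucc p s) succ_ex.
exists [set z | exists a, H a <= z]; split; last split.
- split; first by move=> x y xy [a ha]; exists a; exact: Order.POrderTheory.le_trans ha xy.
  split.
    move=> J D g sJ [_ glb] allF.
    have [f hf] := @choice _ _ (fun j a => H a <= D j) allF.
    have [k hk] := regJ regK sJ (fun j => ltsm (f j)).
    exists k; apply: glb => _ [j _ <-].
    apply: Order.POrderTheory.le_trans (hf j).
    by apply: mono; apply: knlt_le; apply: hk.
  move=> i u lu [a0 ha0]; apply: contrapT => nF.
  have nF' : forall w b, A i b -> ~ H w <= b.
    by move=> w b Ab Hwb; apply: nF; exists b; split => //; exists w.
  have relb : forall b, kle a0 b -> Rel b H i.
    move=> b a0b; split; first by exists u; split => //; exact: Order.POrderTheory.le_trans (mono _ _ a0b) ha0.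
    by move=> [w [_ [b' [Ab' hw]]]]; exact: nF' Ab' hw.
  have step : forall b, exists j, kle a0 b -> Rel b H j /\ (forall j', Rel b H j' -> kle j j') /\
      exists c, A j c /\ H (sc b) <= c.
    move=> b; have [a0b|na] := pselect (kle a0 b); last by exists i.
    have [_ _ _ V4 _] := VH (sc b).
    have := V4 b (sc b) (hsc b) (kle_refl _).
    rewrite Hr; last exact: kle_refl.
    have ag : agree b (restr H (sc b)) H.
      by move=> w wb; apply: Hr; apply: kle_trans wb _; apply: klt_le; case: (hsc b).
    move=> /(NextP_agree ag) [[j [rj [mj [c [Ac E]]]]]|[nr _]]; last by case: (nr i (relb b a0b)).
    exists j => _; split => //; split => //; exists c; split => //.
    by rewrite E; exact: leIr.
  have [g hg] := @choice _ _ (fun b j => kle a0 b -> Rel b H j /\ (forall j', Rel b H j' -> kle j j') /\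
      exists c, A j c /\ H (sc b) <= c) step.
  have [infK _] := regK.
  have [si hsi] := succ_ex i.
  apply: (reg2 regK (ltsm a0) (Q := [set b | kle a0 b])).
  + apply: clt_le (ltsm si); apply: (cle_inj (f := g)).
      move=> b a0b /=; have [_ [mg _]] := hg b a0b.
      by apply: kle_lt_trans (mg i (relb b a0b)) (proj1 hsi).
    move=> b b' a0b a0b' E; apply: contrapT => nbb.
    have key : forall b1 b2, kle a0 b1 -> kle a0 b2 -> lt b1 b2 -> g b1 = g b2 -> False.
      move=> b1 b2 h1 h2 b12 E12.
      have [_ [_ [c [Ac Hc]]]] := hg b1 h1.
      have [[_ nsat] _] := hg b2 h2.
      apply: nsat; exists (sc b1); split; first by apply: (proj2 (hsc b1)).
      by exists c; rewrite -E12.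
    by case: (lttot nbb) => h; [exact: key _ _ a0b a0b' h E|exact: key _ _ a0b' a0b h (esym E)].
  + apply/seteqP; split => // b _.
    by case: (kle_or_lt a0 b) => h; [right|left].
- by exists z0; rewrite -(Hr z0 z0 (kle_refl _)); have [_ V2 _ _ _] := VH z0; rewrite V2.
- move=> [a ha]; have [_ _ V3 _ _] := VH (sc a).
  apply: (V3 a (proj1 (hsc a))); rewrite Hr //; exact: klt_le (proj1 (hsc a)).
Qed.

End Main.

Theorem mainTheorem5 (K Lam : Type) (d : Order.disp_t)
    (L : distrLatticeType d) (A : K -> set L) :
  regular_cardinal K -> regular_cardinal Lam ->
  [set: K] #<= [set: Lam] ->
  coherent L Lam K ->
  (forall i, card_lt (A i) [set: Lam]) ->
  exists (X : Type) (f : L -> set X),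
    injective f /\
    (forall x y : L, x <= y -> f x `<=` f y) /\
    (forall (J : Type) (D : J -> L) (g : L),
        card_lt [set: J] [set: K] -> is_glb (range D) g ->
        f g = \bigcap_(j in [set: J]) f (D j)) /\
    (forall (i : K) (u : L), is_lub (A i) u ->
        f u = \bigcup_(a in A i) f a).
Proof.
move=> regK regLam _ coh Asm.
have [lt [irr [tr [tot [wf sm]]]]] := wo_small K.
have [k0 _] : [set: K] !=set0 by apply: infinite_setN0; case: regK.
have [z0 [_ z0min]] := least tot wf (ex_intro (fun z => True) k0 I).
have z0m : forall j, kle lt z0 j by move=> j; exact: z0min.
have sepF : forall x y : L, ~ x <= y -> exists F : set L, good A F /\ F x /\ ~ F y.
  by move=> x y nxy; exact: (sep regK regLam coh Asm irr tr tot wf sm z0m nxy).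
pose X := {F : set L | good A F}.
exists X, (fun x => [set F : X | proj1_sig F x]).
split.
  move=> x y E; apply: contrapT => nxy.
  have [nle|nle] : ~ x <= y \/ ~ y <= x.
    apply: contrapT => /not_orP [/contrapT h1 /contrapT h2]; apply: nxy.
    by apply: Order.POrderTheory.le_anti; rewrite h1 h2.
  - have [F [gF [Fx nFy]]] := sepF _ _ nle.
    have : [set F : X | proj1_sig F x] (exist _ F gF) by [].
    by rewrite E.
  - have [F [gF [Fy nFx]]] := sepF _ _ nle.
    have : [set F : X | proj1_sig F y] (exist _ F gF) by [].
    by rewrite -E.
split.
  by move=> x y xy [F gF] /= Fx; have [up _] := gF; exact: up _ _ xy Fx.
split.
  move=> J D g sJ glbg; apply/seteqP; split.
    move=> [F gF] /= Fg j _ /=; have [up _] := gF; apply: up _ _ _ Fg.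
    by case: glbg => lb _; apply: lb; exists j.
  by move=> [F gF] /= FD; have [up [cp _]] := gF; exact: cp J D g sJ glbg (fun j => FD j I).
move=> i u lu; apply/seteqP; split.
  move=> [F gF] /= Fu; have [up [_ pr]] := gF; have [a [Aa Fa]] := pr i u lu Fu.
  by exists a.
move=> [F gF] [a Aa /= Fa]; have [up _] := gF; apply: up _ _ _ Fa.
by case: lu => ub _; apply: ub.
Qed.
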